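(* Let $S(\lambda)=\frac12\begin{bmatrix}\lambda_1^2&\lambda_1\lambda_2&\lambda_1\lambda_2&\lambda_2^2&\sqrt3\end{bmatrix}$ on ${\mathbb B}^2$, let $C=\begin{bmatrix}\frac12&0&0\end{bmatrix}$, $D=\begin{bmatrix}0&0&0&0&\frac{\sqrt3}{2}\end{bmatrix}$, and for $\gamma\in{\mathbb C}$ let $A_{\gamma,1}=\begin{bmatrix}0&1&0\\0&0&0\\ \gamma&0&0\end{bmatrix}$, $A_{\gamma,2}=\begin{bmatrix}0&0&1\\-\gamma&0&0\\0&0&0\end{bmatrix}$, ${\mathbf A}_\gamma=(A_{\gamma,1},A_{\gamma,2})$. Then $S\in{\mathcal S}_2({\mathbb C}^5,{\mathbb C})$, and for every $\gamma$ with $|\gamma|<\sqrt{3/8}$ the pair $(C,{\mathbf A}_\gamma)$ is contractive and observable and there exist $B_{\gamma,1},B_{\gamma,2}\in{\mathbb C}^{3\times5}$ such that $S(\lambda)=D+C(I-\lambda_1A_{\gamma,1}-\lambda_2A_{\gamma,2})^{-1}(\lambda_1B_{\gamma,1}+\lambda_2B_{\gamma,2})$ is a weakly coisometric (observable) realization of $S$. Moreover, for $\gamma\neq\gamma'$ the pairs $(C,{\mathbf A}_\gamma)$ and $(C,{\mathbf A}_{\gamma'})$ are not unitarily equivalent.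
   Context: ${\mathcal S}_d({\mathcal U},{\mathcal Y})$ is the set of ${\mathcal L}({\mathcal U},{\mathcal Y})$-valued holomorphic $S$ on the unit ball ${\mathbb B}^d\subset{\mathbb C}^d$ such that $M_S:f\mapsto Sf$ is a contraction from ${\mathcal H}_{\mathcal U}(k_d)$ into ${\mathcal H}_{\mathcal Y}(k_d)$, where ${\mathcal H}_{\mathcal Y}(k_d)$ is the reproducing kernel Hilbert space with kernel $I_{\mathcal Y}/(1-\langle\lambda,\zeta\rangle)$. A pair $(C,{\mathbf A})$, $C\in{\mathcal L}({\mathcal X},{\mathcal Y})$, ${\mathbf A}=(A_1,\dots,A_d)$, is contractive if $\sum_jA_j^*A_j+C^*C\le I$, observable if $C(I-\sum_j\lambda_jA_j)^{-1}x\equiv0$ on ${\mathbb B}^d$ implies $x=0$. Two pairs $(C,{\mathbf A})$, $(C',{\mathbf A}')$ are unitarily equivalent if there is a unitary $U$ with $C'U=C$ and $A_j'U=UA_j$ for all $j$. With $A=\mathrm{col}(A_j)$, $B=\mathrm{col}(B_j)$, $Z(\lambda)=[\lambda_1I\ \cdots\ \lambda_dI]$, the realization $S(\lambda)=D+C(I-Z(\lambda)A)^{-1}Z(\lambda)B$ is weakly coisometric if ${\mathbf U}=\begin{bmatrix}A&B\\C&D\end{bmatrix}$ is a contraction and ${\mathbf U}^*$ is isometric on ${\mathcal D}\oplus{\mathcal Y}$, ${\mathcal D}=\overline{\mathrm{span}}\{Z(\zeta)^*(I-A^*Z(\zeta)^* )^{-1}C^*y:\zeta\in{\mathbb B}^d,y\in{\mathcal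 Y}\}$. *)

(* Defs.v *)
From mathcomp Require Import all_boot all_algebra.
From mathcomp Require Import reals.
From mathcomp.real_closed Require Import complex.
Set Implicit Arguments. Unset Strict Implicit. Unset Printing Implicit Defensive.
Import GRing.Theory Num.Theory.
Local Open Scope ring_scope.

Section Defs.
Variable K : numClosedFieldType.

Definition adjm m n (M : 'M[K]_(m, n)) : 'M[K]_(n, m) := (map_mx Num.conj M)^T.

Definition inner n (x y : 'cV[K]_n) : K := \sum_i x i 0 * (y i 0)^*.
Definition sqnorm n (x : 'cV[K]_n) : K := inner x x.

Definition ptinner d (l z : 'I_d -> K) : K := \sum_j l j * (z j)^*.
Definition in_ball d (l : 'I_d -> K) : Prop := ptinner l l < 1.

Definition kd d (l z : 'I_d -> K) : K := (1 - ptinner l z)^-1.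

(* [DA_norm_le f r] : f belongs to H_Y(k_d) (Y = K^m) with norm <= r.
   Aronszajn's description of the RKHS with kernel k_d(.,.) I_Y:
   |<f, sum_i k_{zeta_i} y_i>|^2 <= r^2 ||sum_i k_{zeta_i} y_i||^2 for every
   finite family, where <f, k_zeta y> = <f(zeta), y>. *)
Definition DA_norm_le d m (f : ('I_d -> K) -> 'cV[K]_m) (r : K) : Prop :=
  forall (N : nat) (z : 'I_N -> ('I_d -> K)) (y : 'I_N -> 'cV[K]_m),
    (forall i, in_ball (z i)) ->
    `| \sum_i inner (f (z i)) (y i) | ^+ 2
      <= r ^+ 2 * \sum_i \sum_j kd (z i) (z j) * inner (y j) (y i).

(* S in S_d(K^p, K^m): M_S : f |-> S f is a contraction H_U(k_d) -> H_Y(k_d).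
   (Holomorphy of S is implied, as S u = M_S(u) lies in H_Y(k_d).) *)
Definition schur_class d p m (S : ('I_d -> K) -> 'M[K]_(m, p)) : Prop :=
  forall (f : ('I_d -> K) -> 'cV[K]_p) (r : K), 0 <= r ->
    DA_norm_le f r -> DA_norm_le (fun l => S l *m f l) r.

Definition psd n (M : 'M[K]_n) : Prop :=
  forall x : 'cV[K]_n, 0 <= (adjm x *m M *m x) 0 0.

(* sum_j lambda_j M_j  (= Z(lambda) col(M_j)) *)
Definition Zsum d m n (M : 'I_d -> 'M[K]_(m, n)) (l : 'I_d -> K) : 'M[K]_(m, n) :=
  \sum_j l j *: M j.

Definition contractive_pair d n m (C : 'M[K]_(m, n)) (A : 'I_d -> 'M[K]_n) : Prop :=
  psd (1%:M - \sum_j adjm (A j) *m A j - adjm C *m C).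

Definition observable d n m (C : 'M[K]_(m, n)) (A : 'I_d -> 'M[K]_n) : Prop :=
  forall x : 'cV[K]_n,
    (forall l, in_ball l -> C *m invmx (1%:M - Zsum A l) *m x = 0) -> x = 0.

Definition unitary n (U : 'M[K]_n) : Prop :=
  adjm U *m U = 1%:M /\ U *m adjm U = 1%:M.

Definition unit_equiv d n m (C : 'M[K]_(m, n)) (A : 'I_d -> 'M[K]_n)
    (C' : 'M[K]_(m, n)) (A' : 'I_d -> 'M[K]_n) : Prop :=
  exists U : 'M[K]_n, unitary U /\ C' *m U = C /\ forall j, A' j *m U = U *m A j.

Definition realizes d n p m (S : ('I_d -> K) -> 'M[K]_(m, p))
    (A : 'I_d -> 'M[K]_n) (B : 'I_d -> 'M[K]_(n, p))
    (C : 'M[K]_(m, n)) (D : 'M[K]_(m, p)) : Prop :=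
  forall l, in_ball l -> S l = D + C *m invmx (1%:M - Zsum A l) *m Zsum B l.

Definition colnorm d n (x : 'I_d -> 'cV[K]_n) : K := \sum_j sqnorm (x j).

(* U = [A B; C D] : X (+) U -> X^d (+) Y is a contraction *)
Definition colligation_contraction d n p m (A : 'I_d -> 'M[K]_n)
    (B : 'I_d -> 'M[K]_(n, p)) (C : 'M[K]_(m, n)) (D : 'M[K]_(m, p)) : Prop :=
  forall (x : 'cV[K]_n) (u : 'cV[K]_p),
    colnorm (fun j => A j *m x + B j *m u) + sqnorm (C *m x + D *m u)
      <= sqnorm x + sqnorm u.

(* generators Z(zeta)^adj (I - A^adj Z(zeta)^adj)^{-1} C^adj y of the space D *)
Definition Dgen d n m (A : 'I_d -> 'M[K]_n) (C : 'M[K]_(m, n))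
    (z : 'I_d -> K) (y : 'cV[K]_m) : 'I_d -> 'cV[K]_n :=
  fun j => (z j)^* *: (invmx (1%:M - \sum_k (z k)^* *: adjm (A k)) *m adjm C *m y).

(* v in D = span of the generators (closed, since finite-dimensional) *)
Definition in_Dspace d n m (A : 'I_d -> 'M[K]_n) (C : 'M[K]_(m, n))
    (v : 'I_d -> 'cV[K]_n) : Prop :=
  exists (N : nat) (z : 'I_N -> ('I_d -> K)) (y : 'I_N -> 'cV[K]_m),
    (forall i, in_ball (z i)) /\
    forall j, v j = \sum_i Dgen A C (z i) (y i) j.

(* U^adj is isometric on D (+) Y *)
Definition adjoint_isometric_on d n p m (A : 'I_d -> 'M[K]_n)
    (B : 'I_d -> 'M[K]_(n, p)) (C : 'M[K]_(m, n)) (D : 'M[K]_(m, p)) : Prop :=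
  forall (v : 'I_d -> 'cV[K]_n) (y : 'cV[K]_m), in_Dspace A C v ->
    sqnorm (\sum_j adjm (A j) *m v j + adjm C *m y)
      + sqnorm (\sum_j adjm (B j) *m v j + adjm D *m y)
      = colnorm v + sqnorm y.

Definition weakly_coisometric_realization d n p m
    (S : ('I_d -> K) -> 'M[K]_(m, p)) (A : 'I_d -> 'M[K]_n)
    (B : 'I_d -> 'M[K]_(n, p)) (C : 'M[K]_(m, n)) (D : 'M[K]_(m, p)) : Prop :=
  [/\ realizes S A B C D, colligation_contraction A B C D
    & adjoint_isometric_on A B C D].

End Defs.

Section Example.
Variable R : realType.
Local Notation CC := (R[i]).

Definition i0 : 'I_2 := ord0.
Definition i1 : 'I_2 := lift ord0 ord0.

Definition Sex (l : 'I_2 -> CC) : 'M[CC]_(1, 5) :=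
  2^-1 *: \row_(k < 5)
    [:: l i0 ^+ 2; l i0 * l i1; l i0 * l i1; l i1 ^+ 2; sqrtC 3]`_k.

Definition Cex : 'M[CC]_(1, 3) := \row_(k < 3) [:: 2^-1; 0; 0]`_k.

Definition Dex : 'M[CC]_(1, 5) := \row_(k < 5) [:: 0; 0; 0; 0; sqrtC 3 / 2]`_k.

Definition A1ex (g : CC) : 'M[CC]_3 :=
  \matrix_(i < 3, j < 3) nth 0 (nth [::] [:: [:: 0; 1; 0]; [:: 0; 0; 0]; [:: g; 0; 0]] i) j.
Definition A2ex (g : CC) : 'M[CC]_3 :=
  \matrix_(i < 3, j < 3) nth 0 (nth [::] [:: [:: 0; 0; 1]; [:: - g; 0; 0]; [:: 0; 0; 0]] i) j.
Definition Aex (g : CC) : 'I_2 -> 'M[CC]_3 :=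
  fun j => if j == i0 then A1ex g else A2ex g.

End Example.

(* Main.v *)
Require Import Defs.
From mathcomp Require Import all_boot all_algebra.
From mathcomp Require Import reals.
From mathcomp.real_closed Require Import complex.
From mathcomp Require Import ring order.
Import Order.TTheory GRing.Theory Num.Theory.
Local Open Scope ring_scope.
Set Implicit Arguments. Unset Strict Implicit.

Section Gen.
Variable K : numClosedFieldType.

Lemma adjmM m n p (M : 'M[K]_(m, n)) (N : 'M[K]_(n, p)) :
  adjm (M *m N) = adjm N *m adjm M.
Proof. by rewrite /adjm map_mxM trmx_mul. Qed.

Lemma adjmK m n (M : 'M[K]_(m, n)) : adjm (adjm M) = M.
Proof. by apply/matrixP => i j; rewrite /adjm !mxE conjCK. Qed.

Lemma eq_ge0 (e f : K) : e = f -> 0 <= f -> 0 <= e.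
Proof. by move=> ->. Qed.

End Gen.

Section S.
Variable R : realType.
Local Notation CC := (R[i]).

Lemma Aex0 (g : CC) : Aex g i0 = A1ex g. Proof. by []. Qed.
Lemma Aex1 (g : CC) : Aex g i1 = A2ex g. Proof. by []. Qed.

Lemma conj_half : ((2 : CC)^-1)^* = 2^-1.
Proof. by apply: conj_Creal; rewrite rpredV rpred_nat. Qed.

Lemma conj_s3 : (sqrtC (3 : CC))^* = sqrtC 3.
Proof. by apply: conj_Creal; apply: ger0_real; rewrite sqrtC_ge0 ler0n. Qed.

Lemma s3sq : sqrtC (3 : CC) ^+ 2 = 3.
Proof. exact: sqrtCK. Qed.

Lemma s3neq0 : sqrtC (3 : CC) != 0.
Proof. by rewrite sqrtC_eq0 pnatr_eq0. Qed.

Ltac expand := rewrite ?(mxE, summxE, big_ord_recl, big_ord0).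
Ltac conjs := rewrite ?(rmorphD, rmorphN, rmorphB, rmorphM, rmorphXn, rmorph0, rmorph1, conjCK, conj_half, conj_s3).

Lemma CA_nonequiv (g g' : CC) : g != g' -> ~ unit_equiv (@Cex R) (Aex g) (@Cex R) (Aex g').
Proof.
move=> gg' [U [[UU1 UU2] [CU AU]]].
have CsU : U *m adjm (@Cex R) = adjm (@Cex R).
  have h : adjm U *m adjm (@Cex R) = adjm (@Cex R) by rewrite -adjmM CU.
  by rewrite -{1}h mulmxA UU2 mul1mx.
have key : Cex R *m A1ex g' *m A2ex g' *m adjm (@Cex R) = Cex R *m A1ex g *m A2ex g *m adjm (@Cex R).
  have A0 := AU i0; have A1 := AU i1; rewrite Aex0 in A0; rewrite Aex1 in A1.
  rewrite -{1}CsU !mulmxA -(mulmxA (Cex R *m A1ex g') (A2ex g') U) A1.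
  by rewrite !mulmxA -(mulmxA (Cex R) (A1ex g') U) A0 mulmxA CU.
have E : forall h : CC, (Cex R *m A1ex h *m A2ex h *m adjm (@Cex R)) ord0 ord0 = - h * 2^-1 * 2^-1.
  move=> h; rewrite /adjm; expand => /=; conjs; ring.
move/matrixP: key => /(_ ord0 ord0); rewrite !E.
have hn : (2 : CC)^-1 != 0 by rewrite invr_eq0 pnatr_eq0.
move/(mulIf hn)/(mulIf hn)/oppr_inj => e.
by rewrite e eqxx in gg'.
Qed.

Definition Pm (g : CC) (l : 'I_2 -> CC) : 'M[CC]_3 := \matrix_(i<3,j<3) nth 0 (nth [::] [:: [:: 1; l i0; l i1]; [:: - l i1 * g; 1 - l i0 * l i1 * g; - l i1 ^+ 2 * g]; [:: l i0 * g; l i0 ^+2 * g; 1 + l i0 * l i1 * g]] i) j.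

Lemma invmx_eq n (M P : 'M[CC]_n.+1) : M *m P = 1%:M -> invmx M = P.
Proof.
move=> h; have [uM _] := mulmx1_unit h.
by rewrite -[invmx M]mulmx1 -h mulmxA mulVmx // mul1mx.
Qed.

Lemma invP (g : CC) l : invmx (1%:M - Zsum (Aex g) l) = Pm g l.
Proof.
apply: invmx_eq.
apply/matrixP => i j; rewrite /Zsum !mxE.
expand.
case: i => [[|[|[|i]]] Hi] //; case: j => [[|[|[|j]]] Hj] //=.
all: ring.
Qed.

Definition Qm (g : CC) (z : 'I_2 -> CC) : 'M[CC]_3 :=
  let a := (z i0)^* in let b := (z i1)^* in let h := g^* in
  \matrix_(i<3,j<3) nth 0 (nth [::] [:: [:: 1; - b * h; a * h]; [:: a; 1 - a * b * h; a ^+ 2 * h]; [:: b; - b ^+ 2 * h; 1 + a * b * h]] i) j.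

Lemma invQ (g : CC) z : invmx (1%:M - \sum_k (z k)^* *: adjm (Aex g k)) = Qm g z.
Proof.
apply: invmx_eq.
apply/matrixP => i j; rewrite /adjm !mxE.
expand.
case: i => [[|[|[|i]]] Hi] //; case: j => [[|[|[|j]]] Hj] //=.
all: conjs; ring.
Qed.

Lemma contractive_ex (g : CC) : g * g^* < 3 / 8 -> contractive_pair (@Cex R) (Aex g).
Proof.
move=> hg x; rewrite /adjm.
expand => /=; conjs.
apply: (@eq_ge0 _ _ (2 * (3/8 - g * g^*) * (x ord0 ord0 * (x ord0 ord0)^*))).
  by field.
by rewrite mulr_ge0 ?mul_conjC_ge0 // mulr_ge0 ?ler0n // subr_ge0 ltW.
Qed.

End S.


Section S2.
Variable R : realType.
Local Notation CC := (R[i]).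
Ltac expand := rewrite ?(mxE, summxE, big_ord_recl, big_ord0).
Ltac conjs := rewrite ?(rmorphD, rmorphN, rmorphB, rmorphM, rmorphXn, rmorph0, rmorph1, conjCK, conj_half, conj_s3).

Definition pt (a b : CC) : 'I_2 -> CC := fun j => if j == i0 then a else b.

Lemma obsE (g : CC) l (x : 'cV[CC]_3) :
  (Cex R *m Pm g l *m x) ord0 ord0 = 2^-1 * (x ord0 ord0 + l i0 * x (lift ord0 ord0) ord0 + l i1 * x (lift ord0 (lift ord0 ord0)) ord0).
Proof. expand => /=; ring. Qed.

Lemma half_ball : in_ball (pt 2^-1 0) /\ in_ball (pt 0 2^-1).
Proof.
have h : (2 : CC)^-1 * 2^-1 < 1.
  have h2 : (2 : CC)^-1 < 1 by rewrite invf_lt1 ?ltr0n ?ltr1n.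
  apply: (le_lt_trans _ h2); rewrite ler_piMr ?invr_ge0 ?ler0n // ltW //.
by rewrite /in_ball /ptinner /pt; split; expand => /=; conjs; rewrite ?mulr0 ?addr0 ?add0r.
Qed.

Lemma observable_ex (g : CC) : observable (@Cex R) (Aex g).
Proof.
move=> x H.
have E l : in_ball l -> x ord0 ord0 + l i0 * x (lift ord0 ord0) ord0 + l i1 * x (lift ord0 (lift ord0 ord0)) ord0 = 0.
  move=> hl; have := H l hl; rewrite invP => /matrixP /(_ ord0 ord0).
  rewrite obsE mxE => /eqP; rewrite mulf_eq0 invr_eq0 pnatr_eq0 /= => /eqP //.
have b0 : in_ball (pt 0 0) by rewrite /in_ball /ptinner; expand => /=; conjs; rewrite !mulr0 !addr0 ltr01.
have [b1 b2] := half_ball.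
have e0 := E _ b0; have e1 := E _ b1; have e2 := E _ b2.
rewrite /pt /= !mul0r !addr0 in e0.
rewrite /pt /= e0 !mul0r add0r addr0 in e1 e2.
have hn : (2 : CC)^-1 != 0 by rewrite invr_eq0 pnatr_eq0.
move/eqP: e1; rewrite mulf_eq0 (negbTE hn) /= => /eqP e1.
rewrite !add0r in e2; move/eqP: e2; rewrite mulf_eq0 (negbTE hn) /= => /eqP e2.
apply/matrixP => i j; rewrite (ord1 j) mxE.
case: i => [[|[|[|i]]] Hi] //=; [rewrite -[X in _ = X]e0 | rewrite -[X in _ = X]e1 | rewrite -[X in _ = X]e2]; congr (x _ _); apply: val_inj => //.
Qed.

End S2.


Section S3.
Variable R : realType.
Local Notation CC := (R[i]).
Ltac expand := rewrite ?(mxE, summxE, big_ord_recl, big_ord0).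
Lemma cD (a b : CC) : (a + b)^* = a^* + b^*. Proof. exact: rmorphD. Qed.
Lemma cN (a : CC) : (- a)^* = - a^*. Proof. exact: rmorphN. Qed.
Lemma cB (a b : CC) : (a - b)^* = a^* - b^*. Proof. exact: rmorphB. Qed.
Lemma cM (a b : CC) : (a * b)^* = a^* * b^*. Proof. exact: rmorphM. Qed.
Lemma cX (a : CC) n : (a ^+ n)^* = a^* ^+ n. Proof. exact: rmorphXn. Qed.
Lemma cV (a : CC) : (a^-1)^* = (a^*)^-1. Proof. exact: fmorphV. Qed.
Lemma c0 : (0 : CC)^* = 0. Proof. exact: rmorph0. Qed.
Lemma c1 : (1 : CC)^* = 1. Proof. exact: rmorph1. Qed.
Ltac conjs := rewrite ?(cD, cN, cB, cM, cX, cV, c0, c1, conjCK, conj_half, conj_s3).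

Definition B1ex (g : CC) : 'M[CC]_(3,5) :=
  \matrix_(i<3,k<5) nth 0 (nth [::] [:: [:: 0; 0; 0; 0; 0]; [:: 1; 0; 0; 0; 0]; [:: 0; 2^-1; 2^-1; 0; - (g / sqrtC 3)]] i) k.
Definition B2ex (g : CC) : 'M[CC]_(3,5) :=
  \matrix_(i<3,k<5) nth 0 (nth [::] [:: [:: 0; 0; 0; 0; 0]; [:: 0; 2^-1; 2^-1; 0; g / sqrtC 3]; [:: 0; 0; 0; 1; 0]] i) k.
Definition Bex (g : CC) : 'I_2 -> 'M[CC]_(3,5) := fun j => if j == i0 then B1ex g else B2ex g.

Lemma realizes_ex (g : CC) : realizes (@Sex R) (Aex g) (Bex g) (@Cex R) (@Dex R).
Proof.
move=> l _; rewrite invP /Zsum.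
apply/matrixP => i j; rewrite (ord1 i).
expand => /=.
case: j => [[|[|[|[|[|j]]]]] Hj] //=.
all: by field; rewrite ?(s3neq0 R).
Qed.

Lemma contraction_ex (g : CC) : g * g^* < 3 / 8 ->
  colligation_contraction (Aex g) (Bex g) (@Cex R) (@Dex R).
Proof.
move=> hg x u; rewrite -subr_ge0 /colnorm /sqnorm /inner.
pose s := sqrtC (3 : CC).
pose u1 := u (lift ord0 ord0) 0.
pose u2 := u (lift ord0 (lift ord0 ord0)) 0.
pose u4 := u (lift ord0 (lift ord0 (lift ord0 (lift ord0 ord0)))) 0.
pose x0 := x ord0 0.
apply: (@eq_ge0 _ _ ((u1 - u2) * (u1 - u2)^* * 2^-1 + 2 * (3/8 - g * g^*) * ((x0 - u4 / s) * (x0 - u4 / s)^*))).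
  rewrite /u1 /u2 /u4 /x0 /s.
  expand => /=. conjs.
  by field: (s3sq R); rewrite ?(s3neq0 R).
apply: addr_ge0.
  by apply: mulr_ge0; [exact: mul_conjC_ge0 | rewrite invr_ge0 ler0n].
apply: mulr_ge0; last exact: mul_conjC_ge0.
apply: mulr_ge0; first exact: ler0n.
by rewrite subr_ge0 ltW.
Qed.

End S3.


Section S4.
Variable R : realType.
Local Notation CC := (R[i]).
Ltac expand := rewrite ?(mxE, summxE, big_ord_recl, big_ord0).
Ltac conjs := rewrite ?(cD, cN, cB, cM, cX, cV, c0, c1, conjCK, conj_half, conj_s3).

Lemma Dsym (g : CC) N (z : 'I_N -> 'I_2 -> CC) (y : 'I_N -> 'cV[CC]_1) (v : 'I_2 -> 'cV[CC]_3) :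
  (forall j, v j = \sum_i Dgen (Aex g) (Cex R) (z i) (y i) j) ->
  v (lift ord0 ord0) (lift ord0 ord0) 0 = v ord0 (lift ord0 (lift ord0 ord0)) 0.
Proof.
move=> hv; rewrite !hv !summxE; apply: eq_bigr => i _.
rewrite /Dgen invQ /adjm; expand => /=; conjs; ring.
Qed.

Lemma iso_ex (g : CC) : adjoint_isometric_on (Aex g) (Bex g) (@Cex R) (@Dex R).
Proof.
move=> v y [N [z [y' [hz hv]]]].
have hs := Dsym hv.
rewrite /colnorm /sqnorm /inner /adjm; expand => /=; conjs.
rewrite hs.
by field: (s3sq R); rewrite ?(s3neq0 R).
Qed.

End S4.


Section G5.
Variable K : numClosedFieldType.

Lemma cMK (a b : K) : (a * b)^* = a^* * b^*. Proof. exact: rmorphM. Qed.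
Lemma cDK (a b : K) : (a + b)^* = a^* + b^*. Proof. exact: rmorphD. Qed.
Lemma cBK (a b : K) : (a - b)^* = a^* - b^*. Proof. exact: rmorphB. Qed.
Lemma cNK (a : K) : (- a)^* = - a^*. Proof. exact: rmorphN. Qed.
Lemma cSK N (F : 'I_N -> K) : (\sum_i F i)^* = \sum_i (F i)^*. Proof. exact: rmorph_sum. Qed.

Lemma inner_mul m n (M : 'M[K]_(m, n)) (x : 'cV[K]_n) (y : 'cV[K]_m) :
  inner (M *m x) y = inner x (adjm M *m y).
Proof.
rewrite /inner; under eq_bigr do rewrite mxE mulr_suml.
rewrite exchange_big; apply: eq_bigr => k _ /=.
rewrite mxE cSK mulr_sumr; apply: eq_bigr => i _.
by rewrite /adjm !mxE cMK conjCK mulrCA mulrA.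
Qed.

Lemma sum_conj_ge0 N (X : 'I_N -> K) : 0 <= \sum_i \sum_j (X i)^* * X j.
Proof.
have -> : \sum_i \sum_j (X i)^* * X j = (\sum_j X j) * (\sum_i X i)^*.
  rewrite mulrC cSK mulr_suml; apply: eq_bigr => i _.
  by rewrite mulr_sumr.
exact: mul_conjC_ge0.
Qed.

Lemma sum3_ge0 N (c : K) (X0 X1 X2 : 'I_N -> K) : 0 <= c ->
  0 <= \sum_i \sum_j c * ((X0 i)^* * X0 j + (X1 i)^* * X1 j + (X2 i)^* * X2 j).
Proof.
move=> c0.
have -> : \sum_i \sum_j c * ((X0 i)^* * X0 j + (X1 i)^* * X1 j + (X2 i)^* * X2 j)
  = c * (\sum_i \sum_j (X0 i)^* * X0 j + \sum_i \sum_j (X1 i)^* * X1 j + \sum_i \sum_j (X2 i)^* * X2 j).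
  rewrite -!big_split mulr_sumr; apply: eq_bigr => i _.
  by rewrite -!big_split mulr_sumr.
by rewrite mulr_ge0 // !addr_ge0 // sum_conj_ge0.
Qed.

Lemma ptinner_ge0 (a : 'I_2 -> K) : 0 <= ptinner a a.
Proof. by rewrite /ptinner sumr_ge0 // => i _; exact: mul_conjC_ge0. Qed.

Lemma ball_neq (a b : 'I_2 -> K) : in_ball a -> in_ball b -> 1 - ptinner a b != 0.
Proof.
rewrite /in_ball => ha hb; apply/negP => /eqP /subr0_eq h.
pose e := a ord0 * b (lift ord0 ord0) - a (lift ord0 ord0) * b ord0.
have L : ptinner a a * ptinner b b = ptinner a b * (ptinner a b)^* + e * e^*.
  rewrite /ptinner /e !big_ord_recl !big_ord0 ?(cDK, cBK, cNK, cMK, conjCK); ring.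
rewrite -h rmorph1 mul1r in L.
have h1 : 1 <= ptinner a a * ptinner b b by rewrite L lerDl mul_conjC_ge0.
have h2 : ptinner a a * ptinner b b < 1.
  apply: (le_lt_trans _ ha); rewrite ler_piMr ?ptinner_ge0 // ltW //.
by move: (le_lt_trans h1 h2); rewrite ltxx.
Qed.

End G5.

Section S5.
Variable R : realType.
Local Notation CC := (R[i]).
Ltac expand := rewrite ?(mxE, summxE, big_ord_recl, big_ord0).
Ltac conjs := rewrite ?(cD, cN, cB, cM, cX, cV, c0, c1, conjCK, conj_half, conj_s3).

Lemma schur_ex : schur_class (@Sex R).
Proof.
move=> f r r0 hf N z y hz.
pose y' := fun i => adjm (Sex (z i)) *m y i.
have e1 : \sum_i inner (Sex (z i) *m f (z i)) (y i) = \sum_i inner (f (z i)) (y' i).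
  by apply: eq_bigr => i _; rewrite inner_mul.
rewrite /= e1; apply: le_trans (hf N z y' hz) _.
apply: ler_wpM2l; first exact: exprn_ge0.
pose Y := fun i => y i ord0 0.
pose X0 := fun i => Y i.
pose X1 := fun i => Y i * (z i ord0)^*.
pose X2 := fun i => Y i * (z i (lift ord0 ord0))^*.
have key : forall i j, kd (z i) (z j) * inner (y j) (y i) - kd (z i) (z j) * inner (y' j) (y' i)
   = 2^-1 * 2^-1 * ((X0 i)^* * X0 j + (X1 i)^* * X1 j + (X2 i)^* * X2 j).
  move=> i j.
  have hAB : inner (y j) (y i) - inner (y' j) (y' i) = (1 - ptinner (z i) (z j)) * (2^-1 * 2^-1 * ((X0 i)^* * X0 j + (X1 i)^* * X1 j + (X2 i)^* * X2 j)).
    rewrite /inner /ptinner /y' /Sex /adjm /X0 /X1 /X2 /Y; expand => /=; conjs.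
    by field: (s3sq R).
  by rewrite -mulrBr hAB /kd mulrA mulVf ?mul1r // ball_neq.
rewrite -subr_ge0 -sumrB.
rewrite (eq_bigr (fun i => \sum_j 2^-1 * 2^-1 * ((X0 i)^* * X0 j + (X1 i)^* * X1 j + (X2 i)^* * X2 j))).
  by apply: sum3_ge0; rewrite mulr_ge0 // invr_ge0 ler0n.
by move=> i _; rewrite -sumrB; apply: eq_bigr => j _; exact: key.
Qed.

End S5.


Theorem mainTheorem6 (R : realType) :
  schur_class (@Sex R) /\
  (forall gamma : R[i], `|gamma| < sqrtC (3 / 8) ->
     [/\ contractive_pair (@Cex R) (Aex gamma),
         observable (@Cex R) (Aex gamma) &
         exists B : 'I_2 -> 'M[R[i]]_(3, 5),
           weakly_coisometric_realization (@Sex R) (Aex gamma) B (@Cex R) (@Dex R)]) /\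
  (forall gamma gamma' : R[i], gamma != gamma' ->
     ~ unit_equiv (@Cex R) (Aex gamma) (@Cex R) (Aex gamma')).
Proof.
split; first exact: schur_ex.
split.
- move=> g hg.
  have hg2 : g * g^* < 3 / 8.
    have n1 : g * g^* \is Num.nneg by rewrite nnegrE mul_conjC_ge0.
    have n2 : (3/8 : R[i]) \is Num.nneg by rewrite nnegrE divr_ge0 ?ler0n.
    by rewrite normC_def (ltr_sqrtC n1 n2) in hg.
  split; [exact: contractive_ex | exact: observable_ex | ].
  exists (Bex g); split; [exact: realizes_ex | exact: contraction_ex | exact: iso_ex].
- exact: CA_nonequiv.
Qed.
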